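(* Let $G\subset \mathrm U(1,n+1)_{\mathbb Cp}$ be a Lie subgroup that is weakly irreducible, i.e. does not preserve any proper nonzero non-degenerate complex subspace of $\mathbb C^{1,n+1}$. Then $\Gamma(G)\subset\mathrm{Sim}\,\mathbb C^n$ does not preserve any proper complex affine subspace of $\mathbb C^n$. Consequently, if $\Gamma(G)$ preserves a proper real affine subspace $L\subset\mathbb C^n$, then the minimal complex affine subspace of $\mathbb C^n$ containing $L$ is $\mathbb C^n$.
   Context: $\mathbb C^{1,n+1}$ has a Witt basis $p,e_1,\dots,e_n,q$ (only nonzero values $h(p,q)=h(q,p)=1$, $h(e_j,e_j)=1$), $\mathbb C^n=\mathrm{span}_{\mathbb C}\{e_1,\dots,e_n\}$ with its Hermitian metric. $\mathrm U(1,n+1)_{\mathbb Cp}$ is the subgroup of $\mathrm U(1,n+1)$ preserving the line $\mathbb Cp$; it is generated by the matrices (in the basis $p,e_1,\dots,e_n,q$) $\begin{pmatrix} e^a&0&0\\0&A&0\\0&0&e^{-\bar a}\end{pmatrix}$ ($a\in\mathbb C$, $A\in\mathrm U(n)$) and $\begin{pmatrix} 1&-\bar Z^t& -\tfrac12\bar Z^tZ+ic\\0&E_n&Z\\0&0&1\end{pmatrix}$ ($Z\in\mathbb C^n$, $c\in\mathbb R$). $\mathrm{Sim}\,\mathbb C^n=(\mathbb R^*\cdot\mathrm U(n))\ltimes\mathbb C^n$ is the group of similarity transformations of $\mathbb C^n$, and $\Gamma:\mathrm U(1,n+1)_{\mathbb Cp}\to\mathrm{Sim}\,\mathbb C^n$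 is the homomorphism sending the first type of generator to the linear map $e^{\bar a}A$ and the second to the translation by $Z$ (geometrically, it is induced by the action on the boundary of complex hyperbolic space minus the point $\mathbb Cp$, i.e. on the Heisenberg space $\mathbb C^n\oplus\mathbb R$, followed by projection to $\mathbb C^n$). *)

(* Defs.v *)
From HB Require Import structures.
From mathcomp Require Import all_boot all_order all_algebra.
Set Implicit Arguments. Unset Strict Implicit. Unset Printing Implicit Defensive.
Import Order.TTheory GRing.Theory Num.Theory.
Local Open Scope ring_scope.

(* The complex field is modelled by an arbitrary numClosedFieldType C
   (algebraically closed field with complex conjugation z^*, real elements
   = Num.real).  C^{1,n+1} = column vectors indexed by 'I_(n.+2) in the Witt
   basis p (index 0), e_1..e_n (indices 1..n), q (index n+1). *)

Section Defs.
Variable C : numClosedFieldType.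
Variable n : nat.

Definition idx_p : 'I_(n.+2) := ord0.
Definition idx_q : 'I_(n.+2) := ord_max.
Definition idx_e (j : 'I_n) : 'I_(n.+2) := lift ord0 (widen_ord (leqnSn n) j).

Definition Hmat : 'M[C]_(n.+2) :=
  \matrix_(i, j)
    (if ((i == idx_p) && (j == idx_q)) || ((i == idx_q) && (j == idx_p))
        || ((i == j) && (i != idx_p) && (i != idx_q))
     then 1 else 0).

Definition herm (u v : 'rV[C]_(n.+2)) : C :=
  (map_mx Num.conj u *m Hmat *m v^T) 0 0.

Definition unitary (M : 'M[C]_(n.+2)) : Prop :=
  (map_mx Num.conj M)^T *m Hmat *m M = Hmat.

Definition pvec : 'cV[C]_(n.+2) := delta_mx idx_p 0.

Definition U_Cp (M : 'M[C]_(n.+2)) : Prop :=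
  unitary M /\ exists l : C, M *m pvec = l *: pvec.

Definition subgroup_U_Cp (G : 'M[C]_(n.+2) -> Prop) : Prop :=
  [/\ forall g, G g -> U_Cp g,
      G 1%:M,
      forall g k, G g -> G k -> G (g *m k)
    & forall g, G g -> G (invmx g)].

(* Complex subspaces of C^{1,n+1}: row spaces of square matrices W
   (rows = coordinate vectors).  g preserves W iff g(W) <= W. *)
Definition preserves_subspace (g W : 'M[C]_(n.+2)) : Prop :=
  (W *m g^T <= W)%MS.

Definition nondegenerate (W : 'M[C]_(n.+2)) : Prop :=
  forall v : 'rV[C]_(n.+2), (v <= W)%MS ->
    (forall w : 'rV[C]_(n.+2), (w <= W)%MS -> herm v w = 0) -> v = 0.

Definition weakly_irreducible (G : 'M[C]_(n.+2) -> Prop) : Prop :=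
  forall W : 'M[C]_(n.+2),
    (forall g, G g -> preserves_subspace g W) -> nondegenerate W ->
    \rank W = 0%N \/ \rank W = n.+2.

(* Every g in U(1,n+1)_{Cp} is block upper
   triangular [[*,*,*],[0,B,v],[0,0,mu]]; writing g = T(Z,c) D(e^a,A) one finds
   B = A, mu = e^{-conj a}, v = Z e^{-conj a}, so Gamma(g) : x |-> e^{conj a} A x + Z
   is x |-> mu^{-1} (B x + v).  Points of C^n are row vectors. *)
Definition Gamma (g : 'M[C]_(n.+2)) (x : 'rV[C]_n) : 'rV[C]_n :=
  (g idx_q idx_q)^-1 *:
    \row_(j < n) (\sum_(k < n) g (idx_e j) (idx_e k) * x 0 k + g (idx_e j) idx_q).

Definition in_caff (a : 'rV[C]_n) (V : 'M[C]_n) (x : 'rV[C]_n) : Prop :=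
  (x - a <= V)%MS.

Definition real_affine (L : 'rV[C]_n -> Prop) : Prop :=
  (exists x, L x) /\
  forall x y t, L x -> L y -> t \is Num.real -> L ((1 - t) *: x + t *: y).

End Defs.

(* Main.v *)
Require Import Defs.
From HB Require Import structures.
From mathcomp Require Import all_boot all_order all_algebra.
From mathcomp Require Import zify ring.
Set Implicit Arguments. Unset Strict Implicit. Unset Printing Implicit Defensive.
Import Order.TTheory GRing.Theory Num.Theory.
Local Open Scope ring_scope.

Section Aux.
Variable C : numClosedFieldType.
Variable n : nat.

Local Notation p := (idx_p n).
Local Notation q := (idx_q n).
Local Notation e := (@idx_e n).

Lemma pq_neq : p != q.
Proof. by apply/eqP => /(congr1 val). Qed.
Lemma ep_neq m : e m != p.
Proof. by apply/eqP => /(congr1 val); rewrite /= /bump. Qed.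
Lemma eq_neq m : e m != q.
Proof. apply/eqP => /(congr1 val); rewrite /= /bump /=.
have := ltn_ord m; lia. Qed.
Lemma e_inj : injective e.
Proof. move=> a b /(congr1 val); rewrite /= /bump /= => [[]] h; exact: val_inj. Qed.

Lemma idx_cases (i : 'I_(n.+2)) : i = p \/ (exists m, i = e m) \/ i = q.
Proof.
case: i => [[|k] hk].
  by left; apply: val_inj.
case: (ltnP k n) => hkn.
  by right; left; exists (Ordinal hkn); apply: val_inj; rewrite /= /bump.
by right; right; apply: val_inj => /=; lia.
Qed.

Lemma sum3 (f : 'I_(n.+2) -> C) :
  \sum_i f i = f p + \sum_m f (e m) + f q.
Proof.
rewrite big_ord_recl big_ord_recr /= addrA.
congr (_ + _ + f _); apply: val_inj => /=; by rewrite /bump.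
Qed.

Lemma sum_ind (m : nat) (F : 'I_m -> C) k : \sum_i F i * (i == k)%:R = F k.
Proof.
rewrite (bigD1 k) //= eqxx mulr1 big1 ?addr0 // => i /negbTE ->; by rewrite mulr0.
Qed.
Lemma sum_ind' (m : nat) (F : 'I_m -> C) k : \sum_i F i * (k == i)%:R = F k.
Proof. rewrite -(sum_ind F k); apply: eq_bigr => i _; by rewrite eq_sym. Qed.

Lemma Hmat_p j : Hmat C n p j = (j == q)%:R.
Proof.
rewrite mxE eqxx /= ?(negbTE pq_neq) /= ?andbF ?orbF.
by case: (j == q).
Qed.
Lemma Hmat_cp i : Hmat C n i p = (i == q)%:R.
Proof.
rewrite mxE eqxx ?(negbTE pq_neq) ?andbF ?andbT /=.
case: (idx_cases i) => [->|[[m ->]|->]]; rewrite ?eqxx ?(negbTE pq_neq) ?(negbTE (ep_neq m)) ?(negbTE (eq_neq m)) //=;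
  rewrite ?(eq_sym q p) ?(negbTE pq_neq) /= ?andbF //.
Qed.
Lemma Hmat_cq i : Hmat C n i q = (i == p)%:R.
Proof.
rewrite mxE eqxx andbT.
case: (idx_cases i) => [->|[[m ->]|->]]; rewrite ?eqxx ?(negbTE pq_neq) ?(negbTE (ep_neq m)) ?(negbTE (eq_neq m)) //=;
  rewrite ?(eq_sym q p) ?(negbTE pq_neq) /= ?andbF //.
Qed.
Lemma Hmat_ce i m : Hmat C n i (e m) = (i == e m)%:R.
Proof.
rewrite mxE.
case: (idx_cases i) => [->|[[k ->]|->]]; rewrite ?eqxx ?(negbTE pq_neq) ?(negbTE (ep_neq m)) ?(negbTE (eq_neq m)) ?(negbTE (ep_neq k)) ?(negbTE (eq_neq k)) //=;
  rewrite ?(eq_sym p (e m)) ?(eq_sym q (e m)) ?(negbTE (ep_neq m)) ?(negbTE (eq_neq m)) /= ?andbF ?andbT ?(inj_eq e_inj) //; by case: (_ == _).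
Qed.

Lemma herm_E (u w : 'rV[C]_(n.+2)) :
  herm u w = (u 0 q)^* * w 0 p + \sum_m (u 0 (e m))^* * w 0 (e m) + (u 0 p)^* * w 0 q.
Proof.
rewrite /herm mxE sum3.
have hc : forall j, (map_mx Num.conj u *m Hmat C n) 0 j = \sum_i (u 0 i)^* * Hmat C n i j.
  by move=> j; rewrite mxE; apply: eq_bigr => i _; rewrite mxE.
have hp : \sum_i (u 0 i)^* * Hmat C n i p = (u 0 q)^*.
  by rewrite -(sum_ind (fun i => (u 0 i)^*) q); apply: eq_bigr => i _; rewrite Hmat_cp.
have hq : \sum_i (u 0 i)^* * Hmat C n i q = (u 0 p)^*.
  by rewrite -(sum_ind (fun i => (u 0 i)^*) p); apply: eq_bigr => i _; rewrite Hmat_cq.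
have he : forall m, \sum_i (u 0 i)^* * Hmat C n i (e m) = (u 0 (e m))^*.
  by move=> m; rewrite -(sum_ind (fun i => (u 0 i)^*) (e m)); apply: eq_bigr => i _; rewrite Hmat_ce.
rewrite !hc !mxE hp hq; congr (_ + _ + _).
by apply: eq_bigr => m _; rewrite hc he mxE.
Qed.


Lemma U_facts (g : 'M[C]_(n.+2)) : U_Cp g ->
  [/\ forall i, i != p -> g i p = 0, g q q != 0 & forall m, g q (e m) = 0].
Proof.
case => hu [l hl].
have gp : forall i, g i p = l * (i == p)%:R.
  move=> i; have := congr1 (fun M : 'M[C]_(n.+2,1) => M i 0) hl; rewrite /= !mxE.
  rewrite (bigD1 p) //= big1 ?addr0; last first.
    by move=> k hk; rewrite mxE (negbTE hk) mulr0.
  rewrite /pvec !mxE eqxx /= mulr1 => ->. by rewrite eqxx andbT.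
have e1 : forall j, ((map_mx Num.conj g)^T *m Hmat C n) p j = (l^*) * Hmat C n p j.
  move=> j; rewrite mxE (bigD1 p) //= big1 ?addr0.
  - by rewrite !mxE gp eqxx mulr1.
  - by move=> i hi; rewrite !mxE gp (negbTE hi) mulr0 conjC0 mul0r.
have e2 : forall k, l^* * g q k = Hmat C n p k.
  move=> k; rewrite -[RHS](congr1 (fun M : 'M[C]_(n.+2) => M p k) hu) mxE (bigD1 q) //= big1 ?addr0.
    by rewrite e1 Hmat_p eqxx mulr1.
  by move=> j hj; rewrite e1 Hmat_p (negbTE hj) mulr0 mul0r.
have hq := e2 q; rewrite Hmat_p eqxx in hq.
split.
- by move=> i hi; rewrite gp (negbTE hi) mulr0.
- by apply/eqP => h; rewrite h mulr0 in hq; move/eqP: hq; rewrite eq_sym oner_eq0.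
- move=> m; have := e2 (e m); rewrite Hmat_p (negbTE (eq_neq m)) => /eqP.
  rewrite mulf_eq0 => /orP [|/eqP //].
  by move=> /eqP h; rewrite h mul0r in hq; move/eqP: hq; rewrite eq_sym oner_eq0.
Qed.


Definition Bt (g : 'M[C]_(n.+2)) : 'M[C]_n := \matrix_(k, j) g (e j) (e k).
Definition vr (g : 'M[C]_(n.+2)) : 'rV[C]_n := \row_j g (e j) q.
Definition Tm (g : 'M[C]_(n.+2)) := (g q q)^-1 *: Bt g.

Lemma GammaE g x : Gamma g x = x *m Tm g + (g q q)^-1 *: vr g.
Proof.
rewrite /Gamma /Tm -scalemxAr -scalerDr; congr (_ *: _); apply/rowP => j; rewrite !mxE.
congr (_ + _); apply: eq_bigr => k _; by rewrite mxE mulrC.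
Qed.

Lemma Gamma_lin g x y : Gamma g x - Gamma g y = (x - y) *m Tm g.
Proof. by rewrite !GammaE mulmxBl opprD addrACA subrr addr0. Qed.

Lemma subB_sub (k : nat) (A B : 'M[C]_(k, n)) (V : 'M[C]_n) :
  (A <= V)%MS -> (B <= V)%MS -> (A - B <= V)%MS.
Proof. by move=> hA hB; apply: addmx_sub => //; rewrite -scaleN1r; apply: scalemx_sub. Qed.

Definition Pm (a : 'rV[C]_n) : 'M[C]_(n.+2, n) :=
  \matrix_(i, j) ((i == e j)%:R - (i == q)%:R * a 0 j).

Lemma mulPm (v : 'rV[C]_(n.+2)) a : v *m Pm a = \row_j (v 0 (e j) - v 0 q * a 0 j).
Proof.
apply/rowP => j; rewrite !mxE.
rewrite (eq_bigr (fun i => v 0 i * (i == e j)%:R - (v 0 i * (i == q)%:R) * a 0 j)); last first.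
  by move=> i _; rewrite mxE mulrBr mulrA.
by rewrite sumrB -mulr_suml !sum_ind.
Qed.

Definition emb (x : 'rV[C]_n) : 'rV[C]_(n.+2) := \row_i \sum_m x 0 m * (i == e m)%:R.
Lemma emb_e x j : emb x 0 (e j) = x 0 j.
Proof.
rewrite mxE -(sum_ind' (fun m => x 0 m) j); apply: eq_bigr => m _.
by rewrite (inj_eq e_inj).
Qed.
Lemma emb_p x : emb x 0 p = 0.
Proof. by rewrite mxE big1 // => m _; rewrite eq_sym (negbTE (ep_neq m)) mulr0. Qed.
Lemma emb_q x : emb x 0 q = 0.
Proof. by rewrite mxE big1 // => m _; rewrite eq_sym (negbTE (eq_neq m)) mulr0. Qed.

Definition Wsp (a : 'rV[C]_n) (V : 'M[C]_n) := kermx (Pm a *m cokermx V).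
Lemma inW (v : 'rV[C]_(n.+2)) a V : (v <= Wsp a V)%MS = (v *m Pm a <= V)%MS.
Proof. by rewrite sub_kermx mulmxA -submxE. Qed.

Lemma vgT (v : 'rV[C]_(n.+2)) (g : 'M[C]_(n.+2)) i : (v *m g^T) 0 i = \sum_k v 0 k * g i k.
Proof. by rewrite mxE; apply: eq_bigr => k _; rewrite mxE. Qed.

Lemma core (g : 'M[C]_(n.+2)) a V : U_Cp g ->
  (forall x, in_caff a V x -> in_caff a V (Gamma g x)) ->
  forall v : 'rV[C]_(n.+2), (v *m Pm a <= V)%MS -> ((v *m g^T) *m Pm a <= V)%MS.
Proof.
move=> hU hinv v hv.
have [g0 hmu gqe] := U_facts hU.
have H1 : (Gamma g a - a <= V)%MS by apply: hinv; rewrite /in_caff subrr sub0mx.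
have H2 : forall z : 'rV_n, (z <= V)%MS -> (z *m Tm g <= V)%MS.
  move=> z hz.
  have -> : z *m Tm g = (Gamma g (a + z) - a) - (Gamma g a - a).
    by rewrite opprB addrA subrK Gamma_lin (addrC a z) addrK.
  apply: subB_sub => //; apply: hinv; by rewrite /in_caff (addrC a z) addrK.
have -> : (v *m g^T) *m Pm a
    = g q q *: ((v *m Pm a) *m Tm g + v 0 q *: (Gamma g a - a)).
  apply/rowP => j.
  have c1 : (v *m g^T) 0 (e j) = \sum_m v 0 (e m) * g (e j) (e m) + v 0 q * g (e j) q.
    by rewrite vgT sum3 g0 ?ep_neq // mulr0 add0r.
  have c2 : (v *m g^T) 0 q = v 0 q * g q q.
    rewrite vgT sum3 g0 ?(eq_sym q p) ?pq_neq // mulr0 add0r big1 ?add0r //.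
    by move=> m _; rewrite gqe mulr0.
  rewrite mulPm mxE c1 c2 GammaE.
  have r1 : (v *m Pm a *m Tm g) 0 j = (g q q)^-1 *
     (\sum_m v 0 (e m) * g (e j) (e m) - v 0 q * \sum_m a 0 m * g (e j) (e m)).
    rewrite mulPm mxE mulrBr !mulr_sumr -sumrB; apply: eq_bigr => k _.
    by rewrite !mxE; ring.
  have r2 : (a *m Tm g) 0 j = (g q q)^-1 * \sum_m a 0 m * g (e j) (e m).
    rewrite mxE mulr_sumr; apply: eq_bigr => k _.
    by rewrite !mxE; ring.
  move: r1 r2; rewrite {1}mxE => r1; rewrite {1}mxE => r2.
  rewrite !mxE r1 r2.
  by field.
apply: scalemx_sub; apply: addmx_sub; first exact: H2.
exact: scalemx_sub.
Qed.


Lemma emb_row (x a : 'rV[C]_n) : \row_j (emb x 0 (e j) - emb x 0 q * a 0 j) = x.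
Proof. by apply/rowP => j; rewrite mxE emb_e emb_q mul0r subr0. Qed.

Lemma addmxE (A B : 'rV[C]_(n.+2)) i : (A + B) 0 i = A 0 i + B 0 i.
Proof. by rewrite mxE. Qed.

Lemma part1 (G : 'M[C]_(n.+2) -> Prop) :
  subgroup_U_Cp G -> weakly_irreducible G ->
  forall (a : 'rV[C]_n) (V : 'M[C]_n),
     (forall g, G g -> forall x, in_caff a V x -> in_caff a V (Gamma g x)) ->
     row_full V.
Proof.
move=> [hU h1 hM hI] hW a V hinv.
pose W := Wsp a V.
have pres : forall g, G g -> preserves_subspace g W.
  move=> g hg; apply/row_subP => i; rewrite row_mul inW.
  by apply: (core (hU g hg) (hinv g hg)); rewrite -inW row_sub.
pose dp : 'rV[C]_(n.+2) := \row_i ((i == p)%:R).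
pose dq : 'rV[C]_(n.+2) := \row_i ((i == q)%:R).
have dp_p : dp 0 p = 1 by rewrite mxE eqxx.
have dp_q : dp 0 q = 0 by rewrite mxE eq_sym (negbTE pq_neq).
have dp_e : forall m, dp 0 (e m) = 0 by move=> m; rewrite mxE (negbTE (ep_neq m)).
have dq_p : dq 0 p = 0 by rewrite mxE (negbTE pq_neq).
have dq_q : dq 0 q = 1 by rewrite mxE eqxx.
have dq_e : forall m, dq 0 (e m) = 0 by move=> m; rewrite mxE (negbTE (eq_neq m)).
have dpW : (dp <= W)%MS.
  rewrite inW mulPm (_ : \row_j _ = 0) ?sub0mx //; apply/rowP => j.
  by rewrite mxE [RHS]mxE dp_e dp_q mul0r subr0.
have nd : Defs.nondegenerate W.
  move=> v hv horth.
  have hq : v 0 q = 0.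
    have := horth dp dpW; rewrite herm_E dp_p dp_q big1 ?mulr1 ?mulr0 ?addr0 ?add0r.
      by move/eqP; rewrite conjC_eq0 => /eqP.
    by move=> m _; rewrite dp_e mulr0.
  pose ve := \row_m v 0 (e m).
  have he : forall m, v 0 (e m) = 0.
    have hw : (emb ve <= W)%MS.
      rewrite inW mulPm emb_row; move: hv; rewrite inW mulPm (_ : \row_j _ = ve) //.
      by apply/rowP => j; rewrite !mxE hq mul0r subr0.
    have := horth _ hw; rewrite herm_E emb_p emb_q !mulr0 addr0 add0r.
    move=> hs m; apply/eqP; rewrite -mul_conjC_eq0 mulrC; apply/eqP.
    move: m isT; apply: psumr_eq0P; last first.
      by rewrite -[in RHS]hs; apply: eq_bigr => m _; rewrite emb_e mxE.
    by move=> m _; rewrite -normCKC exprn_ge0.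
  have hp : v 0 p = 0.
    have hw : ((dq + emb a)%R <= W)%MS.
      rewrite inW mulPm (_ : \row_j _ = 0) ?sub0mx //; apply/rowP => j.
      rewrite mxE [RHS]mxE !addmxE dq_e dq_q emb_e emb_q; ring.
    have := horth _ hw; rewrite herm_E hq conjC0 mul0r add0r.
    rewrite big1 ?add0r; last by move=> m _; rewrite he conjC0 mul0r.
    rewrite addmxE dq_q emb_q addr0 mulr1.
    by move/eqP; rewrite conjC_eq0 => /eqP.
  apply/rowP => i; rewrite mxE.
  by case: (idx_cases i) => [->|[[m ->]|->]].
case: (hW W pres nd) => hr.
  have := mxrankS dpW; rewrite hr rank_rV leqn0 eqb0 negbK => /eqP hdp.
  by move: dp_p; rewrite hdp mxE => /eqP; rewrite eq_sym oner_eq0.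
have fW : row_full W by rewrite /row_full hr.
rewrite -sub1mx; apply/row_subP => i.
have := submx_full (emb (row i 1%:M)) fW.
by rewrite inW mulPm emb_row.
Qed.


Lemma part2 (G : 'M[C]_(n.+2) -> Prop) :
  subgroup_U_Cp G -> weakly_irreducible G ->
  forall L : 'rV[C]_n -> Prop,
     real_affine L -> (exists x, ~ L x) ->
     (forall g, G g -> forall x, L x -> L (Gamma g x)) ->
     forall (a : 'rV[C]_n) (V : 'M[C]_n),
       (forall x, L x -> in_caff a V x) -> row_full V.
Proof.
move=> hG hW L [[x0 hx0] _] _ hL a V hLV.
have claim : forall r (V : 'M[C]_n), \rank V = r ->
    (forall x, L x -> (x - x0 <= V)%MS) -> row_full V.
  elim/ltn_ind => r IH U hr hU.
  case rf: (row_full U) => //.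
  have inv : forall g, G g -> (U <= kermx (Tm g *m cokermx U))%MS.
    move=> g hg; case sub: (U <= kermx (Tm g *m cokermx U))%MS => //.
    pose U' := (U :&: kermx (Tm g *m cokermx U))%MS.
    have hU' : forall x, L x -> (x - x0 <= U')%MS.
      move=> x hx; rewrite sub_capmx hU //= sub_kermx mulmxA -submxE.
      rewrite -Gamma_lin (_ : Gamma g x - Gamma g x0 = (Gamma g x - x0) - (Gamma g x0 - x0)).
        by apply: subB_sub; apply: hU; apply: hL.
      by rewrite opprB addrA subrK.
    have lt : (\rank U' < r)%N.
      rewrite -hr ltn_neqAle mxrankS ?capmxSl // andbT.
      rewrite (mxrank_leqif_eq (capmxSl _ _)).2; apply/negP => /andP [_].
      by rewrite sub_capmx sub andbF.
    have := IH _ lt U' erefl hU'; move/eqP => e'.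
    have := rank_leq_col U; move: lt; rewrite e' -hr; lia.
  have := part1 hG hW (a := x0) (V := U); rewrite rf; apply.
  move=> g hg x hx; rewrite /in_caff.
  have -> : Gamma g x - x0 = (Gamma g x0 - x0) + (x - x0) *m Tm g.
    by rewrite -Gamma_lin [RHS]addrC addrA subrK.
  apply: addmx_sub; first by apply: hU; apply: hL.
  have := submx_trans hx (inv g hg).
  by rewrite sub_kermx mulmxA -submxE.
apply: (claim _ V erefl) => x hx.
have -> : x - x0 = (x - a) - (x0 - a) by rewrite opprB addrA subrK.
by apply: subB_sub; apply: hLV.
Qed.

End Aux.

Theorem mainTheorem3 (C : numClosedFieldType) (n : nat)
    (G : 'M[C]_(n.+2) -> Prop) :
  subgroup_U_Cp G -> weakly_irreducible G ->
  (forall (a : 'rV[C]_n) (V : 'M[C]_n),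
     (forall g, G g -> forall x, in_caff a V x -> in_caff a V (Gamma g x)) ->
     row_full V)
  /\
  (forall L : 'rV[C]_n -> Prop,
     real_affine L -> (exists x, ~ L x) ->
     (forall g, G g -> forall x, L x -> L (Gamma g x)) ->
     forall (a : 'rV[C]_n) (V : 'M[C]_n),
       (forall x, L x -> in_caff a V x) -> row_full V).
Proof.
move=> hG hW; split; [exact: part1 | exact: part2].
Qed.
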